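(* Let $(x,y,z)\in E_k$ with $x,y,z$ all non-zero. Write $x=2\cos\theta_x$, $y=2\cos\theta_y$, $z=2\cos\theta_z$, $xz-y=2\cos\theta_{xz-y}$ with $\theta_x,\theta_y,\theta_z,\theta_{xz-y}\in[0,\pi]$, so that $$\cos(\theta_x+\theta_z)+\cos(\theta_x-\theta_z)-\cos(\theta_y)-\cos(\theta_{xz-y})=0.$$ If two of the four terms $\cos(\theta_x+\theta_z)$, $\cos(\theta_x-\theta_z)$, $-\cos(\theta_y)$, $-\cos(\theta_{xz-y})$ sum to zero, then $k=2$.
   Context: $E$ is the set $\{(x,y,z)\in[-2,2]^3:-2\le x^2+y^2+z^2-xyz-2\le2\}$ (the $\mathrm{SU}(2)$ character variety of the one-holed torus in trace coordinates), and $E_k=\{(x,y,z)\in E:x^2+y^2+z^2-xyz-2=k\}$. The map $(x,y,z)\mapsto(x,z,xz-y)$ preserves $E$, so $xz-y\in[-2,2]$. *)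

(* Defs.v *)
From Stdlib Require Import Reals.
Open Scope R_scope.

Definition kappa (x y z : R) : R := x^2 + y^2 + z^2 - x*y*z - 2.

Definition inE (x y z : R) : Prop :=
  -2 <= x <= 2 /\ -2 <= y <= 2 /\ -2 <= z <= 2 /\ -2 <= kappa x y z <= 2.

Definition inEk (k x y z : R) : Prop := inE x y z /\ kappa x y z = k.

Definition two_of_four_sum_zero (a b c d : R) : Prop :=
  a + b = 0 \/ a + c = 0 \/ a + d = 0 \/ b + c = 0 \/ b + d = 0 \/ c + d = 0.

(* Main.v *)
Require Import Defs.
From Stdlib Require Import Reals Lra Psatz.
Open Scope R_scope.

Theorem proposition5p1 (k x y z tx ty tz tw : R) :
  inEk k x y z ->
  x <> 0 -> y <> 0 -> z <> 0 ->
  0 <= tx <= PI -> 0 <= ty <= PI -> 0 <= tz <= PI -> 0 <= tw <= PI ->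
  x = 2 * cos tx -> y = 2 * cos ty -> z = 2 * cos tz ->
  x * z - y = 2 * cos tw ->
  two_of_four_sum_zero (cos (tx + tz)) (cos (tx - tz)) (- cos ty) (- cos tw) ->
  k = 2.
Proof.
  intros [_ Hk] Hx0 Hy0 Hz0 _ _ _ _ Hx Hy Hz Hw H.
  rewrite <- Hk; unfold kappa.
  rewrite cos_plus, cos_minus in H.
  pose proof (sin2_cos2 tx) as Sx. pose proof (sin2_cos2 tz) as Sz.
  simpl in Sx, Sz.
  assert (Hw' : cos tw = 2 * cos tx * cos tz - cos ty) by (rewrite Hx, Hy, Hz in Hw; nra).
  rewrite Hw' in H.
  assert (Hac : cos tx * cos tz <> 0).
  { intro E. apply Rmult_integral in E. destruct E as [E|E]; [apply Hx0|apply Hz0]; lra. }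
  set (a := cos tx) in *. set (c := cos tz) in *. set (b := cos ty) in *.
  set (p := sin tx) in *. set (q := sin tz) in *.
  subst x y z.
  assert (PQ : (p*q)*(p*q) = (1 - a*a)*(1 - c*c)).
  { unfold Rsqr in Sx, Sz. replace ((p*q)*(p*q)) with ((p*p)*(q*q)) by ring.
    replace (p*p) with (1 - a*a) by lra. replace (q*q) with (1 - c*c) by lra. ring. }
  unfold two_of_four_sum_zero in H.
  destruct H as [H|[H|[H|[H|[H|H]]]]].
  - exfalso; apply Hac; lra.
  - assert (b = a*c - p*q) by lra. subst b. ring_simplify. nra.
  - assert (b = a*c + p*q) by lra. subst b. ring_simplify. nra.
  - assert (b = a*c + p*q) by lra. subst b. ring_simplify. nra.
  - assert (b = a*c - p*q) by lra. subst b. ring_simplify. nra.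
  - exfalso; apply Hac; lra.
Qed.
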